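(* Let the filtered space and outer-measure notation be as in the context. Let $I_0\in\mathscr D$ and let $h$ be a positive function on $I_0$ with $h,h^{-1}\in L^1(I_0,\nu)$. Define $H$ on $\mathscr D$ by $H(I)=1/\langle h^{-1}\rangle_I$ if $I\in\mathscr D(I_0)$ and $H(I)=0$ otherwise. Then $H\in L^1(\mathscr D,S^\infty)$ and $$\|H\|_{L^1(\mathscr D,S^\infty)}\le 2\|h\|_{L^1(\nu)} .$$
   Context: $(\mathcal X,\mathfrak S,\nu)$ is a $\sigma$-finite measure space with a filtration $(\mathfrak S_n)_{n\in\mathbb Z}$ of atomic $\sigma$-algebras, $\mathfrak S_n\subset\mathfrak S_{n+1}$; $\mathscr D_n$ is the countable disjoint family of atoms (of positive measure) of $\mathfrak S_n$ and $\mathscr D=\bigcup_n\mathscr D_n$; $\mathscr D(I)=\{I'\in\mathscr D:I'\subset I\}$; $|I|=\nu(I)$, $\langle f\rangle_I=|I|^{-1}\int_I f\,d\nu$. Outer measure: $\nu^*(\mathscr D(I))=\nu(I)$ for $I\in\mathscr D$, and for $\mathcal A\subset\mathscr D$, $\nu^*(\mathcal A)=\inf\sum_{I\in\mathcal K}\nu(I)$ over all $\mathcal K\subset\mathscr D$ with $\mathcal A\subset\bigcup_{I\in\mathcal K}\mathscr D(I)$. For $F:\mathscr D\to\mathbb C$, the size is $S^\infty F(\mathscr D(I))=\sup_{I'\in\mathscr D(I)}|F(I')|$. For $\lambda>0$, $\nu^*(S^\infty F>\lambda)=\inf\{\nu^*(\mathcal G):\mathcal G\subset\mathscr D,\ S^\infty(F\mathbf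 1_{\mathscr D\setminus\mathcal G})(\mathscr D(I))\le\lambda\ \forall I\in\mathscr D\}$, and $\|F\|_{L^p(\mathscr D,S^\infty)}=\big(p\int_0^\infty\lambda^{p-1}\nu^*(S^\infty F>\lambda)\,d\lambda\big)^{1/p}$; $L^p(\mathscr D,S^\infty)$ is the set of $F$ with finite norm. *)

(* Defs.v *)
From HB Require Import structures.
From mathcomp Require Import all_boot all_order all_algebra.
From mathcomp Require Import all_classical all_reals all_analysis.
Set Implicit Arguments. Unset Strict Implicit. Unset Printing Implicit Defensive.
Import Order.TTheory GRing.Theory Num.Theory.
Import numFieldNormedType.Exports.
Local Open Scope classical_set_scope.
Local Open Scope ring_scope.

Section Defs.
Context {d : measure_display} {T : measurableType d} {R : realType}.

(* A filtration (S_n)_{n in Z} of atomic sigma-algebras, given through the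
   families D n of its atoms of positive measure:
   - each D n is countable, consists of measurable sets of positive measure,
     pairwise disjoint;
   - the atoms of positive measure cover X up to a null set;
   - S_n ⊂ S_{n+1}: every atom of S_{n+1} (of positive measure) lies in an
     atom of S_n (of positive measure). *)
Definition atomic_filtration (mu : set T -> \bar R) (D : int -> set (set T)) :=
  [/\ forall n, countable (D n),
      forall n I, D n I -> measurable I /\ (0 < mu I)%E,
      forall n I J, D n I -> D n J -> I `&` J !=set0 -> I = J,
      forall n, mu (~` \bigcup_(I in D n) I) = 0%E
    & forall n J, D (n + 1)%R J -> exists I, D n I /\ J `<=` I].

Definition Dall (D : int -> set (set T)) : set (set T) :=
  [set I | exists n, D n I].

Definition Dsub (D : int -> set (set T)) (I : set T) : set (set T) :=
  [set I' | Dall D I' /\ I' `<=` I].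

(* outer measure on subsets of D generated by nu*(D(I)) = nu(I) *)
Definition nustar (mu : set T -> \bar R) (D : int -> set (set T))
    (A : set (set T)) : \bar R :=
  ereal_inf [set s | exists K : set (set T),
    [/\ K `<=` Dall D, A `<=` \bigcup_(I in K) Dsub D I
      & s = (\esum_(I in K) mu I)%E]].

Definition Sinf (D : int -> set (set T)) (F : set T -> R) (I : set T) : \bar R :=
  ereal_sup [set (`|F J|)%:E | J in Dsub D I].

Definition restrict_out (D : int -> set (set T)) (G : set (set T))
    (F : set T -> R) : set T -> R :=
  fun J => if `[< (Dall D `\` G) J >] then F J else 0.

Definition nustar_level (mu : set T -> \bar R) (D : int -> set (set T))
    (F : set T -> R) (lambda : R) : \bar R :=
  ereal_inf [set nustar mu D G | G in
    [set G | G `<=` Dall D /\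
       forall I, Dall D I -> (Sinf D (restrict_out D G F) I <= lambda%:E)%E]].

Definition L1Sinf_norm (mu : set T -> \bar R) (D : int -> set (set T))
    (F : set T -> R) : \bar R :=
  (\int[lebesgue_measure]_(l in `]0%R, +oo[) nustar_level mu D F l)%E.

Definition avg (mu : set T -> \bar R) (f : T -> R) (I : set T) : R :=
  (fine (mu I))^-1 * fine (\int[mu]_(x in I) (f x)%:E)%E.

Definition Hfun (mu : set T -> \bar R) (D : int -> set (set T)) (I0 : set T)
    (h : T -> R) : set T -> R :=
  fun I => if `[< Dsub D I0 I >] then (avg mu (fun x => (h x)^-1) I)^-1 else 0.

End Defs.

(* Main.v *)
Require Import Defs.
From HB Require Import structures.
From mathcomp Require Import all_boot all_order all_algebra.
From mathcomp Require Import all_classical all_reals all_analysis.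
From mathcomp Require Import measurable_realfun.
From mathcomp Require Import ring lra.
Import Order.TTheory GRing.Theory Num.Theory.
Import numFieldNormedType.Exports.
Local Open Scope classical_set_scope.
Local Open Scope ring_scope.



Lemma le_integral_nm d' (X : measurableType d') (R : realType)
  (m : {measure set X -> \bar R}) (f1 f2 : X -> \bar R) :
  (forall x, 0 <= f1 x)%E -> (forall x, f1 x <= f2 x)%E ->
  (\int[m]_x f1 x <= \int[m]_x f2 x)%E.
Proof.
move=> f10 f12.
have f20 x : (0 <= f2 x)%E by exact: le_trans (f10 x) (f12 x).
rewrite !ge0_integralTE //.
apply: ereal_sup_le => _ [g gf1 <-]; exists g => //= x.
exact: le_trans (gf1 x) (f12 x).
Qed.

Section Filt.
Context d (T : measurableType d) (R : realType) (mu : {measure set T -> \bar R})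
  (D : int -> set (set T)).
Hypothesis HF : atomic_filtration mu D.

Lemma atom_nonempty {n A} : D n A -> A !=set0.
Proof.
case: HF => _ Dpos _ _ _ /Dpos [_ muA].
apply/set0P; apply/negP => /eqP A0; by move: muA; rewrite A0 measure0 ltxx.
Qed.

Lemma up_nest n (k : nat) B : D (n + k%:Z) B -> exists A, D n A /\ B `<=` A.
Proof.
case: HF => _ _ _ _ Dnest.
elim: k B => [|k IH] B.
  by move=> DB; exists B; split => //; move: DB; rewrite (_ : (n + 0%:Z = n)%R) //; exact: addr0.
have -> : (n + k.+1%:Z = (n + k%:Z) + 1)%R by rewrite -addn1 PoszD addrA.
move=> /Dnest [C [DC BC]]; have [A [DA CA]] := IH _ DC.
by exists A; split => //; exact: subset_trans BC CA.
Qed.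

Lemma absz_eq {m n : int} : (n <= m)%R -> m = (n + (`|m - n|%N)%:Z)%R.
Proof. by move=> nm; rewrite gez0_abs ?subr_ge0 // addrCA subrr addr0. Qed.

Lemma up_nest' {n m B} : (n <= m)%R -> D m B -> exists A, D n A /\ B `<=` A.
Proof. by move=> nm; rewrite (absz_eq nm); exact: up_nest. Qed.

Lemma nested {n m A B} : (n <= m)%R -> D n A -> D m B -> A `&` B !=set0 -> B `<=` A.
Proof.
case: HF => _ _ Ddisj _ _ nm DA DB AB.
have [C [DC BC]] := up_nest' nm DB.
have AC : A = C.
  apply: (Ddisj n) => //; case: AB => x [Ax Bx]; exists x; split => //; exact: BC.
by rewrite AC.
Qed.

Variables (I0 : set T) (n0 : int) (DI0 : D n0 I0) (G : set (set T)).
Hypothesis GI0 : forall J, G J -> Dsub D I0 J.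

Definition Kst := [set A | G A /\ exists n, [/\ D n A, (n0 <= n)%R &
  forall m B, (n0 <= m)%R -> (m < n)%R -> D m B -> A `<=` B -> ~ G B]].

Lemma Kst_cover J : G J -> exists A, Kst A /\ J `<=` A.
Proof.
move=> GJ; have [[m DJ] JI0] := GI0 _ GJ.
have [mn0|n0m] := ltP m n0.
- have I0J : I0 `<=` J.
    apply: (nested (ltW mn0) DJ DI0); have [x Jx] := atom_nonempty DJ.
    by exists x; split => //; apply: JI0.
  have JeqI0 : J = I0 by apply/seteqP; split.
  exists I0; split; last by rewrite JeqI0.
  split; first by rewrite -JeqI0.
  exists n0; split => // m' B n0m' m'n0.
  by move: (le_lt_trans n0m' m'n0); rewrite ltxx.
- pose P k := exists B, [/\ D (n0 + k%:Z)%R B, J `<=` B & G B].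
  have ex : exists k, `[< P k >].
    exists `|m - n0|%N; apply/asboolP; exists J; split => //.
    by rewrite -absz_eq.
  case: (ex_minnP ex) => k /asboolP [A [DA JA GA]] kmin.
  exists A; split => //; split => //.
  exists (n0 + k%:Z)%R; split => //; first by rewrite lerDl.
  move=> m' B n0m' m'n DB AB GB.
  have kz : (k <= `|m' - n0|%N)%N.
    apply: kmin; apply/asboolP; exists B; split => //.
      by rewrite -absz_eq.
    exact: subset_trans JA AB.
  move: m'n; rewrite (absz_eq n0m') ltrD2l ltz_nat => /leq_trans/(_ kz).
  by rewrite ltnn.
Qed.

Lemma Kst_disj A B : Kst A -> Kst B -> A `&` B !=set0 -> A = B.
Proof.
have Ddisj := HF; case: Ddisj => _ _ Ddisj _ _.
move=> [GA [n [DA n0n HA]]] [GB [n' [DB n0n' HB]]] AB.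
have [nn'|n'n|e] := ltgtP n n'.
- exfalso; apply: (HB n A n0n nn' DA _ GA).
  exact: nested (ltW nn') DA DB AB.
- exfalso; apply: (HA n' B n0n' n'n DB _ GB).
  by apply: nested (ltW n'n) DB DA _; rewrite setIC.
- by subst n'; exact: Ddisj DA DB AB.
Qed.

End Filt.



Section Fub.
Context d (T : measurableType d) (R : realType) (mu : {measure set T -> \bar R})
  (smu : sigma_finite setT mu).
Definition muS : set T -> \bar R := mu.
HB.instance Definition _ := Measure.on muS.
HB.instance Definition _ := @Measure_isSigmaFinite.Build d T R muS smu.

Lemma fubini_mu (f : (measurableTypeR R * T)%type -> \bar R) :
  measurable_fun setT f -> (forall z, 0 <= f z)%E ->
 (\int[lebesgue_measure]_l \int[mu]_x f (l,x) =
  \int[mu]_x \int[lebesgue_measure]_l f (l,x))%E.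
Proof. move=> mf f0; exact: (@fubini_tonelli _ _ _ _ R lebesgue_measure muS f mf f0). Qed.
End Fub.

Definition Ipos (R : realType) : set R := `[0%R, +oo[%classic.

Lemma inner_int (R : realType) (c : R) : 0 < c ->
  (\int[lebesgue_measure]_l (\1_(Ipos R) l * Num.max 0 (2 - l * c))%:E = (2 / c)%:E)%E.
Proof.
move=> c0.
set L := 2 / c.
have L0 : 0 < L by rewrite divr_gt0.
pose p : {poly R} := 2 *: 'X - (c / 2) *: 'X^2.
have dp l : p^`().[l] = 2 - l * c.
  rewrite /p derivB !derivZ derivX derivXn !hornerE /=.
  by field.
transitivity (\int[lebesgue_measure]_(l in `[0%R, L]) (p^`().[l])%:E)%E.
  rewrite [in RHS]integral_mkcond; apply: eq_integral => l _ /=.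
  rewrite /patch dp indicE /Ipos !mem_setE !in_itv /= andbT.
  have cL : L * c = 2 by rewrite /L divfK // gt_eqF.
  case: (leP 0 l) => l0 /=; last by rewrite mulr0n mul0r.
  rewrite mulr1n mul1r; case: (leP l L) => lL /=.
    congr (_%:E); apply/max_idPr; rewrite subr_ge0 -cL ler_pM2r //.
  rewrite (_ : Num.max _ _ = 0) //; apply/max_idPl.
  by rewrite subr_le0 -cL ler_pM2r // ltW.
rewrite (@continuous_FTC2 _ _ (horner p)) //.
- rewrite -EFinB /p !(hornerD, hornerN, hornerZ, hornerX, hornerXn) /L; congr (_%:E).
  by field; rewrite gt_eqF.
- by apply: continuous_subspaceT; exact: continuous_horner.
- split.
  + by move=> x _; exact: derivable_horner.
  + by apply: cvg_at_right_filter; exact: continuous_horner.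
  + by apply: cvg_at_left_filter; exact: continuous_horner.
- by move=> x _; rewrite -derivE.
Qed.



Lemma S1 d (T : measurableType d) (R : realType)
    (mu : {measure set T -> \bar R}) (D : int -> set (set T))
    (I0 : set T) (h : T -> R) (n0 : int) :
  atomic_filtration mu D ->
  D n0 I0 ->
  (forall x, I0 x -> 0 < h x) ->
  (mu I0 < +oo)%E ->
  mu.-integrable I0 (fun x => ((h x)^-1)%:E) ->
  forall l, 0 < l ->
  (nustar_level mu D (Hfun mu D I0 h) l <=
     \int[mu]_(x in I0) (Num.max 0 (2 - l * (h x)^-1))%:E)%E.
Proof.
move=> HF DI0 hpos muI0 ig l l0.
have [_ Dpos _ _ _] := HF.
have [mI0 _] := Dpos _ _ DI0.
have mg : measurable_fun I0 (fun x => (h x)^-1).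
  by apply/measurable_EFinP; exact: (measurable_int mu).
have gpos x : I0 x -> 0 < (h x)^-1 by move=> /hpos; rewrite invr_gt0.
set Hf := Hfun mu D I0 h.
pose fl x := (Num.max 0 (2 - l * (h x)^-1))%:E.
have mfl A : A `<=` I0 -> measurable A -> measurable_fun A fl.
  move=> AI0 mA; apply/measurable_EFinP; apply: measurable_maxr => //.
  apply: measurable_funB => //; apply: measurable_funM => //.
  exact: measurable_funS mg.
have fl0 x : (0 <= fl x)%E by rewrite lee_fin le_max lexx.
pose G := [set I | Dsub D I0 I /\ l < Hf I].
have GI0 : forall J, G J -> Dsub D I0 J by move=> J [].
pose K := @Kst d T D n0 G.
have avg0 J : Dsub D I0 J -> 0 <= avg mu (fun x => (h x)^-1) J.
  move=> [_ JI0]; apply: mulr_ge0.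
    by rewrite invr_ge0; apply: fine_ge0.
  apply: fine_ge0; apply: integral_ge0 => x Jx.
  by rewrite lee_fin ltW // gpos //; exact: JI0.
apply: (@le_trans _ _ (nustar mu D G)).
  apply: ereal_inf_lbound; exists G => //; split; first by move=> J [[]].
  move=> I _; apply: ge_ereal_sup => _ [J _ <-]; rewrite lee_fin.
  rewrite /restrict_out; case: (pselect ((Dall D `\` G) J)) => [[DJ nGJ]|nJ];
    last by rewrite asboolF // normr0 ltW.
  rewrite asboolT //.
  rewrite /Hf /Hfun; case: (pselect (Dsub D I0 J)) => [sJ|nsJ];
    last by rewrite asboolF // normr0 ltW.
  rewrite asboolT // ger0_norm; last by rewrite invr_ge0 avg0.
  rewrite leNgt; apply/negP => lt; apply: nGJ; split => //.
  by rewrite /Hf /Hfun asboolT.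
apply: (@le_trans _ _ (\esum_(A in K) mu A)%E).
  apply: ereal_inf_lbound; exists K => //; split => //.
    by move=> A [[[DA _] _] _].
  move=> J GJ; have [A [KA JA]] := Kst_cover _ _ _ _ _ HF _ _ DI0 _ GI0 _ GJ.
  by exists A => //; split => //; case: GJ => [[]].
have c1 A : K A -> (mu A <= \int[mu]_(x in A) fl x)%E.
  move=> [[[[n DA] AI0] lHA] _].
  have [mA muA0] := Dpos _ _ DA.
  have muAfin : (mu A < +oo)%E.
    exact: le_lt_trans (le_measure _ (mem_set mA) (mem_set mI0) AI0) muI0.
  have igA := integrableS mI0 mA AI0 ig.
  have sfin := @integrable_fin_num _ _ _ mu _ mA _ igA.
  have mgA : measurable_fun A (fun x => ((h x)^-1)%:E).
    by apply/measurable_EFinP; exact: measurable_funS mg.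
  move: lHA; rewrite /Hf /Hfun asboolT; last by split => //; exists n.
  rewrite /avg.
  set m := fine (mu A); set s := fine (\int[mu]_(x in A) ((h x)^-1)%:E)%E.
  move=> lHA.
  have mE : mu A = m%:E by rewrite fineK // ge0_fin_numE.
  have sE : (\int[mu]_(x in A) ((h x)^-1)%:E = s%:E)%E by rewrite fineK.
  have m0 : 0 < m by rewrite -lte_fin -mE.
  have s0 : 0 <= s.
    rewrite -lee_fin -sE integral_ge0 // => x Ax.
    by rewrite lee_fin ltW // gpos //; exact: AI0.
  have lsm : l * s < m.
    have [->|sn0] := eqVneq s 0; first by rewrite mulr0.
    have sp : 0 < s by rewrite lt_def sn0 s0.
    by move: lHA; rewrite invfM invrK ltr_pdivlMr.
  have e1 : (\int[mu]_(x in A) (fl x + (l * (h x)^-1)%:E) =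
             \int[mu]_(x in A) fl x + (l * s)%:E)%E.
    rewrite ge0_integralD //; last 3 first.
    - exact: mfl.
    - by move=> x Ax; rewrite lee_fin mulr_ge0 ?ltW // gpos //; exact: AI0.
    - by under eq_fun do rewrite EFinM; apply: measurable_funeM.
    congr (_ + _)%E.
    under eq_integral do rewrite EFinM.
    rewrite ge0_integralZl_EFin ?ltW // ?sE // => x Ax.
    by rewrite lee_fin ltW // gpos //; exact: AI0.
  have e2 : ((2 * m)%:E <= \int[mu]_(x in A) (fl x + (l * (h x)^-1)%:E))%E.
    rewrite EFinM -mE -integral_cst //; apply: ge0_le_integral => //.
    - by move=> x _; rewrite lee_fin.
    - by apply: emeasurable_funD => //; [exact: mfl|
        under eq_fun do rewrite EFinM; apply: measurable_funeM].
    - move=> x Ax; rewrite /fl -EFinD lee_fin /=.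
      rewrite -[X in X <= _](subrK (l * (h x)^-1) 2) lerD2r le_max lexx orbT //.
  rewrite e1 in e2; rewrite mE.
  apply: (@le_trans _ _ ((2 * m - l * s)%:E)); first by rewrite lee_fin; lra.
  by rewrite EFinB leeBlDr.
apply: ge_ereal_sup => _ [X [finX XK] <-].
move: finX => /finite_seqP [r Xr0].
have Xr : X = [set` undup r].
  by rewrite Xr0; apply/seteqP; split => x /=; rewrite mem_undup.
rewrite Xr -fsbig_seq ?undup_uniq //.
set r' := undup r.
have r'K A : A \in r' -> K A by move=> Ar; apply: XK; rewrite Xr.
have mK A : K A -> measurable A.
  by move=> [[[[n DA] _] _] _]; have [] := Dpos _ _ DA.
have KI0 A : K A -> A `<=` I0 by move=> [[[_ AI0] _] _].
pose F A := if A \in r' then A else set0.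
apply: (@le_trans _ _ (\sum_(A <- r') \int[mu]_(x in F A) fl x)%E).
  rewrite big_seq [X in (_ <= X)%E]big_seq; apply: lee_sum => A Ar.
  by rewrite /F Ar; exact: c1 (r'K _ Ar).
have mF A : measurable (F A).
  by rewrite /F; case: ifP => // Ar; exact: mK (r'K _ Ar).
have UI0 : \big[setU/set0]_(A <- r') F A `<=` I0.
  rewrite big_seq; elim/big_rec: _ => // A U Ar UI0.
  by rewrite /F Ar subUset; split => //; exact: KI0 (r'K _ Ar).
have mU : measurable (\big[setU/set0]_(A <- r') F A) by exact: bigsetU_measurable.
rewrite -ge0_integral_bigsetU //; last 3 first.
- exact: undup_uniq.
- move=> A B /= Ar Br; rewrite /F Ar Br => AB.
  exact: (Kst_disj _ _ _ _ _ HF _ _ _ _ (r'K _ Ar) (r'K _ Br) AB).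
- exact: mfl.
apply: ge0_subset_integral => //; first exact: mfl.
Qed.



Theorem lemma4p2 (d : measure_display) (T : measurableType d) (R : realType)
    (mu : {measure set T -> \bar R}) (D : int -> set (set T))
    (I0 : set T) (h : T -> R) :
  sigma_finite setT mu ->
  atomic_filtration mu D ->
  Dall D I0 ->
  (forall x, I0 x -> 0 < h x) ->
  mu.-integrable I0 (fun x => (h x)%:E) ->
  mu.-integrable I0 (fun x => ((h x)^-1)%:E) ->
  (L1Sinf_norm mu D (Hfun mu D I0 h) < +oo)%E /\
  (L1Sinf_norm mu D (Hfun mu D I0 h)
     <= 2%:E * \int[mu]_(x in I0) (`|h x|)%:E)%E.
Proof.
move=> smu HF [n0 DI0] hpos ih ig.
have [_ Dpos _ _ _] := HF.
have [mI0 _] := Dpos _ _ DI0.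
have mh : measurable_fun I0 h by apply/measurable_EFinP; exact: (measurable_int mu).
have mg : measurable_fun I0 (fun x => (h x)^-1).
  by apply/measurable_EFinP; exact: (measurable_int mu).
have hfin := @integrable_fin_num _ _ _ mu _ mI0 _ ih.
have gfin := @integrable_fin_num _ _ _ mu _ mI0 _ ig.
have hge0 x : I0 x -> (0 <= (h x)%:E)%E by move=> /hpos/ltW; rewrite lee_fin.
have gge0 x : I0 x -> (0 <= ((h x)^-1)%:E)%E.
  by move=> /hpos; rewrite lee_fin invr_ge0 => /ltW.
have muI0 : (mu I0 < +oo)%E.
  apply: (@le_lt_trans _ _ (\int[mu]_(x in I0) ((h x)%:E + ((h x)^-1)%:E))%E).
    rewrite -(mul1e (mu I0)) -integral_cst //; apply: ge0_le_integral => //.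
    - by apply: emeasurable_funD; apply/measurable_EFinP.
    - move=> x xI0; rewrite /= -EFinD lee_fin.
      have hx := hpos x xI0.
      have [h1|h1] := leP 1 (h x).
        by rewrite (le_trans h1) // lerDl invr_ge0 ltW.
      by rewrite (le_trans (ltW _ : 1 <= (h x)^-1)) ?invf_gt1 // lerDr ltW.
  rewrite ge0_integralD //; last 2 first.
  - by apply/measurable_EFinP.
  - by apply/measurable_EFinP.
  by rewrite -(fineK hfin) -(fineK gfin) -EFinD ltry.
pose k := (fun x => (h x)^-1) \_ I0.
have mk : measurable_fun setT k by exact: (measurable_restrictT _ mI0).1 mg.
pose Fp : (measurableTypeR R * T)%type -> \bar R := fun z =>
  (\1_I0 z.2 * (\1_(Ipos R) z.1 * Num.max 0 (2 - z.1 * k z.2)))%:E.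
have mFp : measurable_fun setT Fp.
  apply/measurable_EFinP; apply: measurable_funM.
    have h1 := @measurable_indic _ T R setT I0 mI0.
    have h2 := @measurable_snd _ _ (measurableTypeR R) T.
    exact: (measurableT_comp h1 h2).
  apply: measurable_funM.
    have h1 := @measurable_indic _ (measurableTypeR R) R setT (Ipos R) (measurable_itv _).
    have h2 := @measurable_fst _ _ (measurableTypeR R) T.
    exact: (measurableT_comp h1 h2).
  apply: measurable_maxr => //; apply: measurable_funB => //.
  apply: measurable_funM; first exact: (@measurable_fst _ _ (measurableTypeR R) T).
  have h2 := @measurable_snd _ _ (measurableTypeR R) T.
  exact: (measurableT_comp mk h2).
have Fp0 z : (0 <= Fp z)%E.
  by rewrite lee_fin !mulr_ge0 // le_max lexx.
have phiE l : 0 < l -> (\int[mu]_x Fp (l, x) =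
    \int[mu]_(x in I0) (Num.max 0 (2 - l * (h x)^-1))%:E)%E.
  move=> l0; rewrite [RHS]integral_mkcond; apply: eq_integral => x _.
  rewrite /Fp /patch /k /= !indicE.
  have -> : l \in Ipos R by rewrite /Ipos mem_setE in_itv /= andbT ltW.
  case: (boolP (x \in I0)) => xI0; first by rewrite !mul1r /patch xI0.
  by rewrite mulr0n mul0r.
have step2 : (L1Sinf_norm mu D (Hfun mu D I0 h) <=
    \int[lebesgue_measure]_l \int[mu]_x Fp (l, x))%E.
  rewrite /L1Sinf_norm integral_mkcond; apply: le_integral_nm.
  - move=> l; rewrite /patch; case: ifP => // _.
    apply: le_ereal_inf_tmp => _ [G _ <-]; apply: le_ereal_inf_tmp => _ [K [_ _ ->]].
    exact: esum_ge0.
  - move=> l; rewrite /patch; case: ifPn => [lpos|_]; last exact: integral_ge0.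
    move: lpos; rewrite mem_setE in_itv /= andbT => l0.
    rewrite phiE //; exact: (@S1 d T R mu D I0 h n0 HF DI0 hpos muI0 ig l l0).
have step3 : (\int[lebesgue_measure]_l \int[mu]_x Fp (l, x) =
    2%:E * \int[mu]_(x in I0) (`|h x|)%:E)%E.
  rewrite (@fubini_mu d T R mu smu) //.
  transitivity (\int[mu]_(x in I0) (2 * h x)%:E)%E.
    rewrite [RHS]integral_mkcond; apply: eq_integral => x _; rewrite /patch.
    case: ifPn => xI0.
      have hx : 0 < h x by apply: hpos; rewrite -in_setE.
      transitivity (\int[lebesgue_measure]_l
          (\1_(Ipos R) l * Num.max 0 (2 - l * (h x)^-1))%:E)%E.
        apply: eq_integral => l _.
        by rewrite /Fp /= indicE xI0 mul1r /k /patch xI0.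
      by rewrite inner_int ?invr_gt0 // invrK.
    apply: integral0_eq => l _.
    by rewrite /Fp /= indicE (negbTE xI0) mulr0n mul0r.
  under eq_integral do rewrite EFinM.
  rewrite ge0_integralZl_EFin //; last by apply/measurable_EFinP.
  congr (_ * _)%E; apply: eq_integral => x xI0.
  by rewrite ger0_norm // ltW // hpos //; rewrite -in_setE.
have habs : (\int[mu]_(x in I0) (`|h x|)%:E = \int[mu]_(x in I0) (h x)%:E)%E.
  apply: eq_integral => x xI0.
  by rewrite ger0_norm // ltW // hpos //; rewrite -in_setE.
split; last by rewrite -step3.
apply: le_lt_trans step2 _; rewrite step3 habs.
by rewrite -(fineK hfin) -EFinM ltry.
Qed.
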